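(* Consider the online execution scheduling algorithm OES (described in the context) applied to a distributed GNN training job with a fixed task placement. Then at every time step $t$ and for every machine $m\in\{1,\dots,M\}$, the ingress flow degree satisfies $\Delta^m_{in}\le \widehat{\Delta^m_{in}}$ and the egress flow degree satisfies $\Delta^m_{out}\le \widehat{\Delta^m_{out}}$.
   Context: Setting (distributed GNN training job). There are $M$ machines; machine $m$ has available incoming bandwidth $B^m_{in}$ and outgoing bandwidth $B^m_{out}$. The set of tasks is $J=J_g\cup J_s\cup J_w\cup J_{ps}$ (graph store servers, samplers, workers, parameter servers (PSs)); each worker has an associated set of samplers. A fixed placement assigns each task $j$ to exactly one machine ($y^m_j=1$ iff $j$ is on machine $m$). Training runs for $N$ iterations in discrete time steps $t=1,2,\dots$; task $j$ takes execution time $p_j$ in every iteration; $(j,n)$ denotes task $j$ in iteration $n$. Successor relation $succ(j,n)$: $(s,n)\in succ(g,n)$ for every graph store server $g$ and sampler $s$; $(w,n)\in succ(s,n)$ for every sampler $s$ and its associated worker $w$; $(ps,n)\in succ(w,n)$ for every worker $w$ and PS $ps$; $(w,n+1)\in succ(ps,n)$ for every PS $ps$ and worker $w$. For each $(j',n')\in succ(j,n)$ with $j,j'$ on different machines there is a flow $(j,n)\to(j',n')$ of data volume $d_{(j,n)\to(j',n')}$, which may only start after $(j,n)$ finishes, must finish before $(j',n')$ starts, and (inter-iteration dependency) may not start before the flow $(j,n-1)\to(j',n'-1)$ has finished. Also $(j,n+1)$ may start only after $(j,n)$ finishes, and if $j,j'$ are on the same machine, $(j',n')$ may start only after $(j,n)$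 finishes (no transfer needed). Algorithm OES. It maintains a set $F_{act}$ of active flows (started but unfinished) and a set $F_{pend}$ of pending flows (whose source task is finished but whose previous-iteration counterpart $(j,n-1)\to(j',n'-1)$ has not finished). At $t=1$ all graph store servers of iteration 1 start. At each time step $t$: every task $(j,n)$ whose dependencies are all satisfied (all required data received, previous iteration of $j$ done) starts; for every task $(j,n)$ that finished at $t-1$ and every inter-machine flow $(j,n)\to(j',n')$ out of it, the flow is added to $F_{pend}$ if $(j,n-1)\to(j',n'-1)\in F_{act}\cup F_{pend}$, and to $F_{act}$ otherwise; for every flow $(j,n)\to(j',n')$ that finished at $t-1$, if $(j,n+1)\to(j',n'+1)\in F_{pend}$ it is moved to $F_{act}$. Then, with $\Delta^m_{in}$ (resp. $\Delta^m_{out}$) the number of flows in $F_{act}$ whose destination (resp. source) task is on machine $m$, every active flow from a task on machine $m$ to a task on machine $m'$ transmits $\min\{B^{m'}_{in}/\Delta^{m'}_{in},\,B^m_{out}/\Delta^m_{out}\}$ data units at time $t$. One-iteration degrees. Let $F_{one\_iter}$ be the set of all inter-machine flows of one training iteration (including the transfers of parameters updated by the PSs in that iteration to the workers). $\widehat{\Delta^m_{in}}$ (resp. $\widehat{\Delta^m_{out}}$) is the number of flows in $F_{one\_iter}$ whose destination (resp. source) task is placed on machine $m$. *)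

(* Defs.v *)
From HB Require Import structures.
From mathcomp Require Import all_boot all_order all_algebra.
Set Implicit Arguments. Unset Strict Implicit. Unset Printing Implicit Defensive.
Import Order.TTheory GRing.Theory Num.Theory.

Inductive role := GraphStore | Sampler | Worker | PServer.

(* Status of a flow (j,n) -> (j',n') in the algorithm:
   not yet created, in F_pend, in F_act, finished. *)
Inductive fstatus := FNone | FPend | FAct | FDone.

Definition is_act (s : fstatus) : bool := if s is FAct then true else false.
Definition is_pend (s : fstatus) : bool := if s is FPend then true else false.
Definition is_none (s : fstatus) : bool := if s is FNone then true else false.
Definition is_done (s : fstatus) : bool := if s is FDone then true else false.
Definition is_pend_or_act (s : fstatus) : bool := is_pend s || is_act s.

Record job (R : realFieldType) := Job {
  task : finType;
  kind : task -> role;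
  assoc : task -> task -> bool;
  nmach : nat;
  place : task -> 'I_nmach;         (* y^m_j = 1 iff place j = m *)
  Bin : 'I_nmach -> R;
  Bout : 'I_nmach -> R;
  ptime : task -> nat;
  dvol : task -> task -> nat -> R;  (* dvol j j' n = volume of the flow out of (j,n) to j' *)
  niter : nat
}.

Section OES.
Variable R : realFieldType.
Variable G : job R.
Local Notation T := (task G).

(* (j',n+off j j') \in succ(j,n)  iff  dep j j' *)
Definition dep (i j : T) : bool :=
  match kind i, kind j with
  | GraphStore, Sampler => true
  | Sampler, Worker => assoc i j
  | Worker, PServer => true
  | PServer, Worker => true
  | _, _ => false
  end.

Definition off (i j : T) : nat :=
  match kind i, kind j with
  | PServer, Worker => 1
  | _, _ => 0
  end.

(* (i,j,n) denotes the flow (i,n) -> (j, n + off i j); it exists iff it is an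
   inter-machine dependency between task instances of iterations 1..N. *)
Definition is_flow (i j : T) (n : nat) : bool :=
  [&& dep i j, place i != place j, 0 < n & n + off i j <= niter G].

(* State of the execution at the end of a time step. *)
Record state := State {
  tstart : T -> nat -> option nat;
  fstat : T -> T -> nat -> fstatus;
  frem : T -> T -> nat -> R;
  ffin : T -> T -> nat -> option nat
}.

(* Task (j,n), started at s0, runs during steps s0 .. s0 + p_j - 1.
   done_before s j n t : (j,n) has finished at a step <= t - 1. *)
Definition done_before (s : state) (j : T) (n t : nat) : bool :=
  if tstart s j n is Some s0 then s0 + ptime j <= t else false.

Definition fin_at_prev (s : state) (j : T) (n t : nat) : bool :=
  if tstart s j n is Some s0 then s0 + ptime j == t else false.

(* All dependencies of (j,n) are satisfied at step t (s = state at end of t-1). *)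
Definition ready (s : state) (t : nat) (j : T) (n : nat) : bool :=
  [&& 0 < n, n <= niter G, tstart s j n == None,
      (n == 1) || done_before s j n.-1 t &
      [forall i : T, (dep i j && (off i j < n)) ==>
          (if place i == place j then done_before s i (n - off i j) t
           else is_done (fstat s i j (n - off i j)))]].

Definition pre_step (t : nat) (s : state) : state :=
  let st1 := fun j n => if ready s t j n then Some t else tstart s j n in
  let fs2 := fun i j n =>
    if [&& is_flow i j n, is_none (fstat s i j n) & fin_at_prev s i n t]
    then (if is_pend_or_act (fstat s i j n.-1) then FPend else FAct)
    else fstat s i j n in
  let fs3 := fun i j n =>
    if is_pend (fs2 i j n) && (ffin s i j n.-1 == Some t.-1) then FAct
    else fs2 i j n in
  State st1 fs3 (frem s) (ffin s).

Definition Delta_in (s : state) (m : 'I_(nmach G)) : nat :=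
  \sum_(i : T) \sum_(j : T) \sum_(n < (niter G).+1)
     (is_act (fstat s i j n) && (place j == m) : nat).

Definition Delta_out (s : state) (m : 'I_(nmach G)) : nat :=
  \sum_(i : T) \sum_(j : T) \sum_(n < (niter G).+1)
     (is_act (fstat s i j n) && (place i == m) : nat).

Definition rate (s : state) (i j : T) : R :=
  (Num.min (Bin (place j) / (Delta_in s (place j))%:R)
           (Bout (place i) / (Delta_out s (place i))%:R))%R.

Definition transmit (t : nat) (s : state) : state :=
  let rem := fun i j n =>
    if is_act (fstat s i j n) then (frem s i j n - rate s i j)%R else frem s i j n in
  let fin := fun i j n => is_act (fstat s i j n) && (rem i j n <= 0)%R in
  State (tstart s)
        (fun i j n => if fin i j n then FDone else fstat s i j n)
        rem
        (fun i j n => if fin i j n then Some t else ffin s i j n).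

Definition init_state : state :=
  State (fun _ _ => None) (fun _ _ _ => FNone) (fun i j n => dvol i j n)
        (fun _ _ _ => None).

Fixpoint state_at (t : nat) : state :=
  match t with
  | 0 => init_state
  | t'.+1 => transmit t'.+1 (pre_step t'.+1 (state_at t'))
  end.

(* The state during time step t (t >= 1), with F_act as used for transmission. *)
Definition active_state (t : nat) : state := pre_step t (state_at t.-1).

Definition oes_Delta_in (t : nat) (m : 'I_(nmach G)) : nat :=
  Delta_in (active_state t) m.
Definition oes_Delta_out (t : nat) (m : 'I_(nmach G)) : nat :=
  Delta_out (active_state t) m.

(* One-iteration degrees: the flows of F_one_iter are in bijection with the
   pairs (j,j') with dep j j' placed on different machines. *)
Definition hat_Delta_in (m : 'I_(nmach G)) : nat :=
  \sum_(i : T) \sum_(j : T)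
     ([&& dep i j, place i != place j & place j == m] : nat).
Definition hat_Delta_out (m : 'I_(nmach G)) : nat :=
  \sum_(i : T) \sum_(j : T)
     ([&& dep i j, place i != place j & place i == m] : nat).

End OES.

Arguments oes_Delta_in {R} G t m.
Arguments oes_Delta_out {R} G t m.
Arguments hat_Delta_in {R} G m.
Arguments hat_Delta_out {R} G m.

(* Main.v *)
Require Import Defs.
From mathcomp Require Import all_boot all_order all_algebra.
From mathcomp Require Import zify.
Set Implicit Arguments. Unset Strict Implicit. Unset Printing Implicit Defensive.

Definition Common (R : realFieldType) (G : job R) (t : nat) (s : state G) : Prop :=
 [/\ forall i j n, fstat s i j n <> FNone -> is_flow i j n,
     forall j n s0, tstart s j n = Some s0 ->
        0 < n /\ (1 < n -> exists s1, tstart s j n.-1 = Some s1 /\ s1 + ptime j <= s0) &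
     forall i j n, is_flow i j n -> is_none (fstat s i j n) = ~~ done_before s i n t].

Definition EndI (R : realFieldType) (G : job R) (t : nat) (s : state G) : Prop :=
 [/\ Common t s,
     forall i j n t', ffin s i j n = Some t' -> fstat s i j n = FDone /\ t' <= t,
     forall i j n, 1 < n -> fstat s i j n = FDone \/ fstat s i j n = FAct ->
        fstat s i j n.-1 = FDone &
     forall i j n, fstat s i j n = FPend -> 1 < n /\
        (fstat s i j n.-1 = FAct \/ fstat s i j n.-1 = FPend \/
         (fstat s i j n.-1 = FDone /\ ffin s i j n.-1 = Some t))].

Definition ActI (R : realFieldType) (G : job R) (t : nat) (s : state G) : Prop :=
 [/\ Common t s,
     forall i j n t', ffin s i j n = Some t' -> fstat s i j n = FDone /\ t' < t,
     forall i j n, 1 < n -> fstat s i j n = FDone \/ fstat s i j n = FAct ->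
        fstat s i j n.-1 = FDone &
     forall i j n, fstat s i j n = FPend -> 1 < n /\
        (fstat s i j n.-1 = FAct \/ fstat s i j n.-1 = FPend)].

Lemma is_flow_pred (R : realFieldType) (G : job R) (i j : task G) n :
  is_flow i j n -> 1 < n -> is_flow i j n.-1.
Proof.
rewrite /is_flow => /and4P [h1 h2 h3 h4] h; apply/and4P; split => //; lia.
Qed.

Lemma is_flow_pos (R : realFieldType) (G : job R) (i j : task G) n :
  is_flow i j n -> 0 < n.
Proof. by rewrite /is_flow => /and4P []. Qed.

Lemma init_ok (R : realFieldType) (G : job R) : EndI 0 (init_state G).
Proof.
split; first split.
- by move=> i j n /=.
- by [].
- by [].
- by [].
- by move=> i j n _ /= [].
- by [].
Qed.

Lemma tr_ok (R : realFieldType) (G : job R) t (s : state G)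
   (c : task G -> task G -> nat -> bool) rem :
  ActI t s ->
  EndI t (State (tstart s)
     (fun i j n => if is_act (fstat s i j n) && c i j n then FDone else fstat s i j n)
     rem
     (fun i j n => if is_act (fstat s i j n) && c i j n then Some t else ffin s i j n)).
Proof.
case=> [[C1 C2 C3] F A2 A3]; split; first split => //=.
- move=> i j n; case: (fstat s i j n) (C1 i j n) => //= -> //; by case: (c i j n).
- move=> i j n /C3 <-; by case: (fstat s i j n) => //=; case: (c i j n).
- move=> i j n t' /=.
  case Ec: (is_act (fstat s i j n) && c i j n); first by move=> [<-].
  by move=> /F [-> h]; split => //; apply: ltnW.
- move=> i j n h1 /= h2.
  have h3 : fstat s i j n = FDone \/ fstat s i j n = FAct.
    case E: (fstat s i j n) h2 => /= h2; try (by left); try (by right);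
    by case: h2 => h; discriminate h.
  by rewrite (A2 i j n h1 h3).
- move=> i j n /=.
  case E: (fstat s i j n) => //=; last by case: (c i j n).
  move=> _; have [h1 h2] := A3 i j n E; split => //.
  case: h2 => ->; last by right; left.
  by case: (c i j n.-1) => /=; [right; right | left].
Qed.
Lemma pre_tstart (R : realFieldType) (G : job R) t (s : state G) j n :
  tstart (pre_step t s) j n = if ready s t j n then Some t else tstart s j n.
Proof. by []. Qed.

Lemma pre_tstart_old (R : realFieldType) (G : job R) t (s : state G) j n x :
  tstart s j n = Some x -> tstart (pre_step t s) j n = Some x.
Proof. by move=> E; rewrite pre_tstart /ready E /= !andbF. Qed.

Lemma pre_spec (R : realFieldType) (G : job R) t (s : state G) i j n :
  (fstat s i j n <> FNone -> fstat (pre_step t.+1 s) i j n =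
     if is_pend (fstat s i j n) && (ffin s i j n.-1 == Some t) then FAct
     else fstat s i j n) /\
  (fstat s i j n = FNone -> fstat (pre_step t.+1 s) i j n =
     if is_flow i j n && fin_at_prev s i n t.+1 then
       (if is_pend_or_act (fstat s i j n.-1) then
          (if ffin s i j n.-1 == Some t then FAct else FPend) else FAct)
     else FNone).
Proof.
rewrite /pre_step /=; case E: (fstat s i j n) => /=; split => // _;
  try by rewrite !andbF.
by case: (is_flow i j n && fin_at_prev s i n t.+1) => //=;
   case: (is_pend_or_act (fstat s i j n.-1)).
Qed.
Lemma pre_ok (R : realFieldType) (G : job R) t (s : state G)
  (Hp : forall j : task G, 0 < ptime j) :
  EndI t s -> ActI t.+1 (pre_step t.+1 s).
Proof.
case=> [[C1 C2 C3] F E2 E3].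
have m1 : forall i j n, fstat s i j n = FDone -> fstat (pre_step t.+1 s) i j n = FDone.
  by move=> i j n E; have [h _] := pre_spec t s i j n; rewrite h E.
have m2 : forall i j n, fstat s i j n = FAct -> fstat (pre_step t.+1 s) i j n = FAct.
  by move=> i j n E; have [h _] := pre_spec t s i j n; rewrite h E.
have m3 : forall i j n, fstat s i j n = FPend ->
   (ffin s i j n.-1 = Some t /\ fstat (pre_step t.+1 s) i j n = FAct) \/
   (ffin s i j n.-1 <> Some t /\ fstat (pre_step t.+1 s) i j n = FPend).
  move=> i j n E; have [h _] := pre_spec t s i j n; rewrite h E //=.
  by case: eqP => h'; [left|right].
have m4 : forall i j n, fstat s i j n = FNone ->
   (fstat (pre_step t.+1 s) i j n = FNone /\ ~~ (is_flow i j n && fin_at_prev s i n t.+1)) \/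
   (is_flow i j n /\ fin_at_prev s i n t.+1 /\
     (((fstat s i j n.-1 = FAct \/ fstat s i j n.-1 = FPend) /\
        fstat (pre_step t.+1 s) i j n = FPend) \/
      ((fstat s i j n.-1 = FNone \/ fstat s i j n.-1 = FDone) /\
        fstat (pre_step t.+1 s) i j n = FAct))).
  move=> i j n E; have [_ h] := pre_spec t s i j n; rewrite h //.
  case Ec: (is_flow i j n && fin_at_prev s i n t.+1); last by left.
  move/andP: Ec => [hf hfin]; right; split => //; split => //.
  case E1: (fstat s i j n.-1) => /=.
  - by right; split; [left|].
  - left; split; [by right|].
    by case: eqP => // /F [h1 _]; rewrite E1 in h1.
  - left; split; [by left|].
    by case: eqP => // /F [h1 _]; rewrite E1 in h1.
  - by right; split; [right|].
have nn : forall i j n, fstat s i j n <> FNone -> fstat (pre_step t.+1 s) i j n <> FNone.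
  move=> i j n; case E: (fstat s i j n) => // _.
  - by case: (m3 _ _ _ E) => [[_ ->]|[_ ->]].
  - by rewrite m2.
  - by rewrite m1.
have tim : forall i j n, is_flow i j n -> fin_at_prev s i n t.+1 -> 1 < n ->
    fstat s i j n.-1 <> FNone.
  move=> i j n hf; rewrite /fin_at_prev; case E: (tstart s i n) => [s0|] // /eqP h1 h2.
  have [_ /(_ h2) [s1 [E1 le1]]] := C2 _ _ _ E.
  have := C3 i j n.-1 (is_flow_pred hf h2); rewrite /done_before E1.
  have -> : s1 + ptime i <= t by have := Hp i; lia.
  by case: (fstat s i j n.-1).
split; first split.
- move=> i j n hn; case E: (fstat s i j n); try (apply: C1; by rewrite E).
  by case: (m4 i j n E) => [[hn' _]|[hf _]].
- move=> j n s0; rewrite pre_tstart; case Er: (ready s t.+1 j n).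
  + case=> <-; move: Er; rewrite /ready => /and5P [h1 h2 h3 h4 h5]; split => // h.
    have hn1 : (n == 1) = false by apply/eqP; lia.
    move: h4; rewrite hn1 /= /done_before.
    case E1: (tstart s j n.-1) => [s1|] // le; exists s1; split => //.
    by rewrite /ready E1 /= !andbF.
  + move=> E; have [h1 h2] := C2 _ _ _ E; split => // h.
    have [s1 [E1 le]] := h2 h; exists s1; split => //; exact: pre_tstart_old.
- move=> i j n hf.
  have -> : done_before (pre_step t.+1 s) i n t.+1 =
     if ready s t.+1 i n then t.+1 + ptime i <= t.+1 else done_before s i n t.+1.
    by rewrite /done_before pre_tstart; case: (ready s t.+1 i n).
  case Er: (ready s t.+1 i n).
  + have Et : tstart s i n = None by move: Er; rewrite /ready => /and5P [_ _ /eqP -> _ _].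
    have Eo : fstat s i j n = FNone.
      by move: (C3 i j n hf); rewrite /done_before Et /=; case: (fstat s i j n).
    have -> : t.+1 + ptime i <= t.+1 = false by have := Hp i; lia.
    case: (m4 i j n Eo) => [[-> _]|[_ [hfin _]]] //.
    by move: hfin; rewrite /fin_at_prev Et.
  + have := C3 i j n hf; rewrite /done_before.
    case Et: (tstart s i n) => [s0|]; last first.
      move=> h; have Eo : fstat s i j n = FNone by move: h; case: (fstat s i j n).
      case: (m4 i j n Eo) => [[-> _]|[_ [hfin _]]] //.
      by move: hfin; rewrite /fin_at_prev Et.
    move=> h.
    case: (ltngtP (s0 + ptime i) t.+1) => hc.
    * have Eo : fstat s i j n <> FNone.
        move: h; have -> : s0 + ptime i <= t by lia.
        by case: (fstat s i j n).
      have := nn _ _ _ Eo; try (have -> : s0 + ptime i <= t.+1 by lia).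
      by case: (fstat (pre_step t.+1 s) i j n).
    * have Eo : fstat s i j n = FNone.
        move: h; have -> : s0 + ptime i <= t = false by lia.
        by case: (fstat s i j n).
      try (have -> : s0 + ptime i <= t.+1 = false by lia).
      case: (m4 i j n Eo) => [[-> _]|[_ [hfin _]]] //.
      by move: hfin; rewrite /fin_at_prev Et => /eqP; lia.
    * have Eo : fstat s i j n = FNone.
        move: h; have -> : s0 + ptime i <= t = false by lia.
        by case: (fstat s i j n).
      try (have -> : s0 + ptime i <= t.+1 by lia).
      case: (m4 i j n Eo) => [[_ /negP []]|[_ [_ [[_ ->]|[_ ->]]]]] //.
      by rewrite hf /fin_at_prev Et hc eqxx.
- move=> i j n t' /= /F [h1 h2]; split; [exact: m1 | lia].
- move=> i j n h1 h2.
  case E: (fstat s i j n).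
  + case: (m4 i j n E) => [[hn _]|[hf [hfin [[_ hP]|[hND hA]]]]].
    * by rewrite hn in h2; case: h2.
    * by rewrite hP in h2; case: h2.
    * case: hND => [hN|hD]; [by case: (tim _ _ _ hf hfin h1 hN) | exact: m1].
  + case: (m3 i j n E) => [[hf _]|[_ hP]].
    * by apply: m1; case: (F _ _ _ _ hf).
    * by rewrite hP in h2; case: h2.
  + by apply: m1; apply: E2 => //; right.
  + by apply: m1; apply: E2 => //; left.
- move=> i j n hP.
  case E: (fstat s i j n).
  + case: (m4 i j n E) => [[hn _]|[hf [hfin [[hAP _]|[_ hA]]]]].
    * by rewrite hn in hP.
    * have h1 : 1 < n.
        have : is_flow i j n.-1 by apply: C1; case: hAP => ->.
        move/is_flow_pos; lia.
      split => //; case: hAP => hAP.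
      - by left; apply: m2.
      - by case: (m3 _ _ _ hAP) => [[_ ->]|[_ ->]]; [left|right].
    * by rewrite hA in hP.
  + case: (m3 i j n E) => [[_ hA]|[hf _]]; first by rewrite hA in hP.
    have [h1 h2] := E3 _ _ _ E; split => //.
    case: h2 => [hA|[hP'|[_ hf']]].
    * by left; apply: m2.
    * by case: (m3 _ _ _ hP') => [[_ ->]|[_ ->]]; [left|right].
    * by case: hf.
  + by rewrite m2 in hP.
  + by rewrite m1 in hP.
Qed.
Lemma end_ok (R : realFieldType) (G : job R)
  (Hp : forall j : task G, 0 < ptime j) t : EndI t (state_at G t).
Proof.
elim: t => [|t IH]; first exact: init_ok.
set S := pre_step t.+1 (state_at G t).
pose rem := fun i j n => if is_act (fstat S i j n)
      then (frem S i j n - rate S i j)%R else frem S i j n.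
exact: (tr_ok (fun i j n => (rem i j n <= 0)%R) rem (pre_ok Hp IH)).
Qed.

Lemma act_ok (R : realFieldType) (G : job R)
  (Hp : forall j : task G, 0 < ptime j) t : 0 < t -> ActI t (active_state G t).
Proof. by case: t => // t _; exact: pre_ok (end_ok Hp t). Qed.

Lemma act_unique (R : realFieldType) (G : job R) t (s : state G) i j a b :
  ActI t s -> is_act (fstat s i j a) -> is_act (fstat s i j b) -> a = b.
Proof.
case=> [[C1 _ _] _ A2 _].
have down : forall k, fstat s i j k = FDone -> forall k', 0 < k' <= k -> fstat s i j k' = FDone.
  elim=> [|k IH] hk k' /andP [h1 h2]; first by move: h1 h2; case: k'.
  have [->//|hc] : k' = k.+1 \/ k' <= k by lia.
  have hk1 : 0 < k by lia.
  apply: IH; last by apply/andP; split => //; lia.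
  by apply: (A2 i j k.+1) => //; left.
wlog lt_ab : a b / a < b.
  move=> W ha hb; case: (ltngtP a b) => hc; [exact: W | symmetry; exact: W | by []].
move=> ha hb.
have pa : 0 < a.
  by apply: (is_flow_pos (i:=i) (j:=j)); apply: C1; move: ha; case: (fstat s i j a).
have hb1 : 1 < b by lia.
have hd : fstat s i j b.-1 = FDone.
  by apply: (A2 i j b hb1); right; move: hb; case: (fstat s i j b).
have := down _ hd a; rewrite pa /=.
have -> : a <= b.-1 by lia.
by move=> /(_ isT) E; rewrite E in ha.
Qed.

Lemma sum_le1 K (f : 'I_K -> bool) :
  (forall a b, f a -> f b -> a = b) -> \sum_(n < K) (f n : nat) <= 1.
Proof.
move=> U; case: (pickP f) => [n0 hn0|h0].
  rewrite (bigD1 n0) //= hn0 big1 // => n hn.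
  by case E: (f n) => //; rewrite (U _ _ E hn0) eqxx in hn.
by rewrite big1 // => n _; rewrite h0.
Qed.

Lemma sum_le_flow (R : realFieldType) (G : job R) t (s : state G) i j (P : bool) :
  ActI t s ->
  \sum_(n < (niter G).+1) (is_act (fstat s i j n) && P : nat) <=
    ([&& dep i j, place i != place j & P] : nat).
Proof.
move=> H; have [[C1 _ _] _ _ _] := H.
case: P; last by rewrite big1 // => n _; rewrite andbF.
rewrite !andbT.
case: (pickP (fun n : 'I_(niter G).+1 => is_act (fstat s i j n))) => [n0 hn0|h0].
  have : is_flow i j n0 by apply: C1; move: hn0; case: (fstat s i j n0).
  rewrite /is_flow => /and4P [-> -> _ _] /=.
  apply: sum_le1 => a b ha hb; apply: ord_inj; rewrite !andbT in ha hb; exact: (act_unique H ha hb).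
by rewrite big1 // => n _; rewrite h0.
Qed.

Theorem lemma1 (R : realFieldType) (G : job R)
  (Hp : forall j : task G, 0 < ptime j)
  (HBin : forall m : 'I_(nmach G), (0 < Bin m)%R)
  (HBout : forall m : 'I_(nmach G), (0 < Bout m)%R)
  (Hd : forall i j : task G, forall n : nat, (0 < dvol i j n)%R) :
  forall (t : nat) (m : 'I_(nmach G)), 0 < t ->
    oes_Delta_in G t m <= hat_Delta_in G m /\
    oes_Delta_out G t m <= hat_Delta_out G m.
Proof.
move=> t m ht; have H := act_ok Hp ht.
rewrite /oes_Delta_in /oes_Delta_out /Delta_in /Delta_out /hat_Delta_in /hat_Delta_out.
split; apply: leq_sum => i _; apply: leq_sum => j _; exact: sum_le_flow H.
Qed.
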